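(* Let $K:X\times X\to\mathbb{R}$ be positive definite and $S\subset X$ a countable subset with $\delta_x\in\mathscr{H}(K^{(S)})$ for all $x\in S$, where $K^{(S)}=K|_{S\times S}$. Let $\Delta$ be the graph Laplacian $(\Delta h)(x)=\langle\delta_x,h\rangle_{\mathscr{H}(K^{(S)})}$ for $x\in S$, $h\in\mathscr{H}(K^{(S)})$. For finite $F\subset S$ let $K_F=(K(x,y))_{x,y\in F}$ and let $P_F$ be the orthogonal projection of $\mathscr{H}(K^{(S)})$ onto $\mathrm{span}\{K^{(S)}(\cdot,y):y\in F\}$. Then, for every $h\in\mathscr{H}(K^{(S)})$: (1) $\|h\|^2_{\mathscr{H}(K^{(S)})}=\sup_F\langle h|_F,(\Delta P_Fh)|_F\rangle_{\ell^2(F)}=\sup_F\langle h|_F,K_F^{-1}(h|_F)\rangle_{\ell^2(F)}$, the suprema over all finite $F\subset S$; (2) for every finite $F\subset S$ and $x\in F$, $(\Delta(P_Fh))(x)=(K_F^{-1}(h|_F))(x)$; (3) for every finite $F\subset S$, $K_F\big((\Delta P_Fh)|_F\big)=h|_F$.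
   Context: $\delta_x$ is the function on $S$ equal to $1$ at $x$ and $0$ elsewhere; $\mathscr{H}(K^{(S)})$ is the reproducing kernel Hilbert space of $K^{(S)}$ on $S$ (completion of the span of $K^{(S)}(\cdot,s)$, $\langle K^{(S)}(\cdot,s),K^{(S)}(\cdot,t)\rangle=K(s,t)$, $\langle K^{(S)}(\cdot,s),h\rangle=h(s)$). Under the hypothesis, each $K_F$ is invertible. *)

(* Defs.v *)
From HB Require Import structures.
From mathcomp Require Import all_boot all_order all_algebra.
From mathcomp Require Import finmap.
From mathcomp Require Import boolp classical_sets cardinality reals constructive_ereal.
Set Implicit Arguments. Unset Strict Implicit. Unset Printing Implicit Defensive.
Import Order.TTheory GRing.Theory Num.Theory.
Local Open Scope ring_scope.
Local Open Scope classical_set_scope.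
Local Open Scope fset_scope.
Local Open Scope ring_scope.

Section RKHS.
Variable R : realType.

(* The points of a subset S of X, as a type with (classical) decidable
   equality and choice, so that finite subsets of S are {fset pts S}. *)
Definition pts (X : Type) (S : set X) := {classic (set_type S)}.

Definition pos_def_kernel (X : Type) (K : X -> X -> R) : Prop :=
  (forall x y, K x y = K y x) /\
  (forall (n : nat) (x : 'I_n -> X) (c : 'I_n -> R),
      0 <= \sum_(i < n) \sum_(j < n) c i * c j * K (x i) (x j)).

Section OnT.
Variable T : Type.

Definition kfun (k : T -> T -> R) (t : T) : T -> R := fun s => k s t.

Definition kspan (k : T -> T -> R) (A : set T) : set (T -> R) :=
  [set g | exists (n : nat) (t : 'I_n -> T) (c : 'I_n -> R),
       (forall i, A (t i)) /\ g = (fun s => \sum_(i < n) c i * k s (t i))].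

Definition fsub (f g : T -> R) : T -> R := fun s => f s - g s.

(* (H, ip) is the reproducing kernel Hilbert space H(k) of k on T:
   the completion of span{k(.,t)} with <k(.,s), k(.,t)> = k(s,t),
   realized as a Hilbert space of functions on T with the reproducing
   property <k(.,t), h> = h(t). *)
Record is_RKHS (k : T -> T -> R) (H : set (T -> R))
    (ip : (T -> R) -> (T -> R) -> R) : Prop := {
  rk_mem : forall t, H (kfun k t);
  rk_lin : forall (a : R) f g, H f -> H g -> H (fun s => a * f s + g s);
  ip_sym : forall f g, H f -> H g -> ip f g = ip g f;
  ip_linl : forall (a : R) f g h, H f -> H g -> H h ->
     ip (fun s => a * f s + g s) h = a * ip f h + ip g h;
  ip_ge0 : forall f, H f -> 0 <= ip f f;
  ip_eq0 : forall f, H f -> ip f f = 0 -> f = (fun _ => 0 : R);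
  rk_repr : forall t f, H f -> ip (kfun k t) f = f t;
  rk_complete : forall u : nat -> T -> R, (forall n, H (u n)) ->
     (forall e : R, 0 < e -> exists N : nat, forall m n : nat,
          (N <= m)%N -> (N <= n)%N -> ip (fsub (u m) (u n)) (fsub (u m) (u n)) < e) ->
     exists f, H f /\ (forall e : R, 0 < e -> exists N : nat, forall n : nat,
          (N <= n)%N -> ip (fsub (u n) f) (fsub (u n) f) < e);
  rk_dense : forall f, H f -> forall e : R, 0 < e ->
     exists g, kspan k setT g /\ ip (fsub f g) (fsub f g) < e
}.

Definition is_orth_proj (k : T -> T -> R) (ip : (T -> R) -> (T -> R) -> R)
    (A : set T) (h g : T -> R) : Prop :=
  kspan k A g /\ forall y, A y -> ip (fsub h g) (kfun k y) = 0.

End OnT.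

Section OnS.
Variables (X : Type) (S : set X).
Local Notation sT := (pts S).

Definition restrK (K : X -> X -> R) : sT -> sT -> R :=
  fun s t => K (val s) (val t).

Definition dirac_fun (x : sT) : sT -> R := fun s => if s == x then 1 else 0.

Definition laplacian (ip : (sT -> R) -> (sT -> R) -> R) (h : sT -> R) : sT -> R :=
  fun x => ip (dirac_fun x) h.

Definition fpt (F : {fset sT}) (i : 'I_#|{: F}|) : sT := val (enum_val i).

Definition gramF (K : X -> X -> R) (F : {fset sT}) : 'M[R]_#|{: F}| :=
  \matrix_(i, j) K (val (fpt i)) (val (fpt j)).

Definition restrF (F : {fset sT}) (h : sT -> R) : 'cV[R]_#|{: F}| :=
  \col_i h (fpt i).

Definition l2dot (n : nat) (u v : 'cV[R]_n) : R := \sum_(i < n) u i 0 * v i 0.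

End OnS.
End RKHS.
Arguments dirac_fun {R X S} x _.

(* Main.v *)
From Pilot Require Import Defs.
From HB Require Import structures.
From mathcomp Require Import all_boot all_order all_algebra.
From mathcomp Require Import finmap.
From mathcomp Require Import boolp classical_sets cardinality reals constructive_ereal ereal.
From mathcomp Require Import lra.
Import Order.TTheory GRing.Theory Num.Theory.
Local Open Scope classical_set_scope.
Local Open Scope fset_scope.
Local Open Scope ring_scope.

Local Notation fsub := Pilot.Defs.fsub.
Set Implicit Arguments.
Unset Strict Implicit.
Section Gen.
Variables (R : realType) (T : Type) (k : T -> T -> R) (H : set (T -> R))
  (ip : (T -> R) -> (T -> R) -> R).
Hypothesis HR : is_RKHS k H ip.
Hypothesis H0 : H (fun _ => 0).

Lemma ip0l g : H g -> ip (fun _ => 0) g = 0.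
Proof.
move=> Hg; have := ip_linl HR 1 H0 H0 Hg.
rewrite (_ : (fun _ => 1 * 0 + 0) = fun _ => 0); last by apply: funext => s; rewrite mulr0 addr0.
rewrite mul1r => E; lra.
Qed.

Lemma H_sum n (c : 'I_n -> R) (f : 'I_n -> T -> R) :
  (forall i, H (f i)) -> H (fun s => \sum_i c i * f i s).
Proof.
elim: n c f => [|n IH] c f Hf.
  by rewrite (_ : (fun s => _) = fun _ => 0) //; apply: funext=> s; rewrite big_ord0.
have -> : (fun s => \sum_(i < n.+1) c i * f i s) =
  fun s => c ord0 * f ord0 s + \sum_(i<n) c (lift ord0 i) * f (lift ord0 i) s.
  by apply: funext => s; rewrite big_ord_recl.
by apply: (rk_lin HR) => //; apply: IH.
Qed.

Lemma ip_sum_l n (c : 'I_n -> R) (f : 'I_n -> T -> R) g :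
  (forall i, H (f i)) -> H g ->
  ip (fun s => \sum_i c i * f i s) g = \sum_i c i * ip (f i) g.
Proof.
elim: n c f => [|n IH] c f Hf Hg.
  rewrite big_ord0 (_ : (fun s => _) = fun _ => 0) ?ip0l //.
  by apply: funext=> s; rewrite big_ord0.
have -> : (fun s => \sum_(i < n.+1) c i * f i s) =
  fun s => c ord0 * f ord0 s + \sum_(i<n) c (lift ord0 i) * f (lift ord0 i) s.
  by apply: funext => s; rewrite big_ord_recl.
rewrite (ip_linl HR) //; last exact: H_sum.
by rewrite IH // big_ord_recl.
Qed.

Lemma ip_sum_r n (c : 'I_n -> R) (f : 'I_n -> T -> R) g :
  (forall i, H (f i)) -> H g ->
  ip g (fun s => \sum_i c i * f i s) = \sum_i c i * ip g (f i).
Proof.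
move=> Hf Hg; rewrite (ip_sym HR) //; last exact: H_sum.
rewrite ip_sum_l //; apply: eq_bigr => i _; by rewrite (ip_sym HR).
Qed.

Lemma kspan_H A g : kspan k A g -> H g.
Proof.
case=> n [t [c [_ ->]]].
exact: (@H_sum n c (fun i => kfun k (t i)) (fun i => rk_mem HR (t i))).
Qed.

Lemma fsub_H f g : H f -> H g -> H (fsub f g).
Proof.
move=> Hf Hg; rewrite (_ : fsub f g = fun s => -1 * g s + f s).
  exact: (rk_lin HR).
by apply: funext => s; rewrite /fsub mulN1r addrC.
Qed.

Lemma ip_fsub_l u v w : H u -> H v -> H w -> ip (fsub u v) w = ip u w - ip v w.
Proof.
move=> Hu Hv Hw; rewrite (_ : fsub u v = fun s => -1 * v s + u s).
  by rewrite (ip_linl HR) // mulN1r addrC.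
by apply: funext => s; rewrite /fsub mulN1r addrC.
Qed.

Lemma ip_fsub_r u v w : H u -> H v -> H w -> ip w (fsub u v) = ip w u - ip w v.
Proof.
move=> Hu Hv Hw; rewrite (ip_sym HR) //; last exact: fsub_H.
by rewrite ip_fsub_l // !(ip_sym HR Hw).
Qed.

Lemma ip_add_l u w z : H u -> H w -> H z -> ip (fun s => u s + w s) z = ip u z + ip w z.
Proof.
move=> Hu Hw Hz; rewrite (_ : (fun s => u s + w s) = fun s => 1 * u s + w s).
  by rewrite (ip_linl HR) // mul1r.
by apply: funext => s; rewrite mul1r.
Qed.

Lemma orth_span A h g f : H h -> is_orth_proj k ip A h g -> kspan k A f ->
  ip (fsub h g) f = 0.
Proof.
move=> Hh [Hg Ho] [n [t [c [At ->]]]].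
have Hg' := kspan_H Hg.
rewrite (@ip_sum_r n c (fun i => kfun k (t i))) //; last exact: fsub_H.
  by apply: big1 => i _; rewrite Ho // mulr0.
by move=> i; exact: (rk_mem HR).
Qed.

Lemma proj_eq A h g y : H h -> is_orth_proj k ip A h g -> A y -> g y = h y.
Proof.
move=> Hh [Hg Ho] Ay; have := Ho y Ay.
rewrite (ip_sym HR); [|exact: fsub_H (kspan_H Hg)|exact: (rk_mem HR)].
rewrite (rk_repr HR); last exact: fsub_H (kspan_H Hg).
by rewrite /fsub => /eqP; rewrite subr_eq0 => /eqP.
Qed.

Lemma pyth A h g : H h -> is_orth_proj k ip A h g ->
  ip h h = ip g g + ip (fsub h g) (fsub h g).
Proof.
move=> Hh Hp; have Hg := kspan_H Hp.1.
have o := orth_span Hh Hp Hp.1.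
have Hd := fsub_H Hh Hg.
rewrite ip_fsub_r // o subr0 ip_fsub_l //.
have : ip g (fsub h g) = 0 by rewrite (ip_sym HR).
rewrite ip_fsub_r // => /eqP; rewrite subr_eq0 => /eqP ->.
by rewrite addrC subrK.
Qed.

Lemma best_approx A h g f : H h -> is_orth_proj k ip A h g -> kspan k A f ->
  ip (fsub h g) (fsub h g) <= ip (fsub h f) (fsub h f).
Proof.
move=> Hh Hp Hf; have Hg := kspan_H Hp.1; have Hf' := kspan_H Hf.
have o1 := orth_span Hh Hp Hp.1; have o2 := orth_span Hh Hp Hf.
have Hu := fsub_H Hh Hg; have Hw := fsub_H Hg Hf'.
have -> : fsub h f = fun s => fsub h g s + fsub g f s.
  by apply: funext => s; rewrite /fsub addrA subrK.
have Huw : H (fun s => fsub h g s + fsub g f s).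
  have := rk_lin HR 1 Hu Hw.
  by rewrite (_ : (fun s => 1 * fsub h g s + fsub g f s) = (fun s => fsub h g s + fsub g f s)) //; apply: funext => s; rewrite mul1r.
set u := fsub h g in Hu Huw o1 o2 *; set w := fsub g f in Hw Huw *.
have uw : ip u w = 0 by rewrite /w ip_fsub_r // o1 o2 subr0.
have wu : ip w u = 0 by rewrite (ip_sym HR Hw Hu).
have e1 : ip (fun s => u s + w s) (fun s => u s + w s) = ip u (fun s => u s + w s) + ip w (fun s => u s + w s) by rewrite ip_add_l.
have e2 : ip u (fun s => u s + w s) = ip u u + ip u w.
  by rewrite (ip_sym HR Hu Huw) ip_add_l // (ip_sym HR Hw Hu).
have e3 : ip w (fun s => u s + w s) = ip w u + ip w w.
  by rewrite (ip_sym HR Hw Huw) ip_add_l // (ip_sym HR Hu Hw).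
rewrite e1 e2 e3 uw wu.
have := ip_ge0 HR Hw; lra.
Qed.

End Gen.

Section Spec.
Variables (R : realType) (X : Type) (K : X -> X -> R) (S : set X).
Variables (H : set (pts S -> R)) (ip : (pts S -> R) -> (pts S -> R) -> R).
Hypothesis HR : is_RKHS (restrK K) H ip.
Hypothesis H0 : H (fun _ => 0).
Hypothesis Hd : forall x : pts S, H (dirac_fun (R:=R) x).
Hypothesis Ksym : forall x y, K x y = K y x.

Lemma fpt_in (F : {fset pts S}) (i : 'I_#|{: F}|) : fpt i \in F.
Proof. exact: fsvalP. Qed.

Definition frank (F : {fset pts S}) x (xF : x \in F) : 'I_#|{: F}| := enum_rank [` xF].

Lemma fpt_rank (F : {fset pts S}) x (xF : x \in F) : fpt (frank xF) = x.
Proof. by rewrite /fpt /frank enum_rankK. Qed.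

Lemma fpt_inj (F : {fset pts S}) : injective (@fpt X S F).
Proof. by move=> i j /val_inj /enum_val_inj. Qed.

Lemma sum_delta (F : {fset pts S}) x (xF : x \in F) (a : 'I_#|{: F}| -> R) :
  \sum_j a j * (if x == fpt j then 1 else 0) = a (frank xF).
Proof.
rewrite (bigD1 (frank xF)) //= fpt_rank eqxx mulr1 big1 ?addr0 // => j ne.
case: eqP => [E|]; last by rewrite mulr0.
by move: ne; rewrite -(fpt_inj (etrans (fpt_rank xF) E)) eqxx.
Qed.

Lemma lap_span n (c : 'I_n -> R) (t : 'I_n -> pts S) x :
  laplacian ip (fun s => \sum_i c i * restrK K s (t i)) x =
  \sum_i c i * (if t i == x then 1 else 0).
Proof.
rewrite /laplacian.
rewrite (@ip_sum_r _ _ _ _ _ HR H0 n c (fun i => kfun (restrK K) (t i))) //;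
  last by move=> i; exact: (rk_mem HR).
apply: eq_bigr => i _; congr (_ * _).
by rewrite (ip_sym HR (Hd x) (rk_mem HR _)) (rk_repr HR _ (Hd x)).
Qed.

Lemma proj3 (F : {fset pts S}) h g : H h -> is_orth_proj (restrK K) ip [set y | y \in F] h g ->
  gramF K F *m restrF F (laplacian ip g) = restrF F h.
Proof.
move=> Hh Hp; have Hp' := Hp; case: Hp' => [[n [t [c [tF gE]]]] _].
apply/matrixP => i j; rewrite !mxE.
rewrite -(proj_eq HR H0 Hh Hp (fpt_in i)).
transitivity (\sum_(j' < #|{: F}|) K (val (fpt i)) (val (@fpt X S F j')) *
   \sum_kk c kk * (if t kk == @fpt X S F j' then 1 else 0)).
  by apply: eq_bigr => j' _; rewrite !mxE gE lap_span.
rewrite gE /restrK.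
under eq_bigr do rewrite big_distrr.
rewrite exchange_big /=; apply: eq_bigr => kk _.
rewrite (eq_bigr (fun j' => (K (val (fpt i)) (val (@fpt X S F j')) * c kk) *
   (if t kk == @fpt X S F j' then 1 else 0))); last by move=> *; rewrite mulrA.
by rewrite (sum_delta (tF kk)) fpt_rank mulrC.
Qed.

Lemma gram_unit (F : {fset pts S}) : gramF K F \in unitmx.
Proof.
rewrite -row_free_unit; apply: inj_row_free => v Hv.
pose g := fun s => \sum_j v 0 j * kfun (restrK K) (fpt j) s.
have Hk : forall j, H (kfun (restrK K) (@fpt X S F j)) by move=> j; exact: (rk_mem HR).
have Hg : H g by exact: (H_sum HR H0).
have gF : forall i : 'I_#|{: F}|, g (@fpt X S F i) = 0.
  move=> i; have := congr1 (fun M : 'rV[R]_#|{: F}| => M 0 i) Hv; rewrite !mxE => E.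
  rewrite -[RHS]E /g /kfun /restrK.
  by apply: eq_bigr => j _; rewrite mxE Ksym.
have gg : ip g g = 0.
  rewrite {1}/g (ip_sum_l HR H0) //; apply: big1 => j _.
  by rewrite (rk_repr HR _ Hg) gF mulr0.
have g0 := ip_eq0 HR Hg gg.
apply/rowP => j; rewrite mxE.
have := lap_span (fun j => v 0 j) (@fpt X S F) (fpt j).
rewrite (_ : (fun s => _) = g) // {1}/laplacian g0.
rewrite (ip_sym HR (Hd _) H0) (ip0l HR H0 (Hd _)).
under eq_bigr do rewrite eq_sym.
rewrite (sum_delta (fpt_in j)) => ->.
by rewrite (fpt_inj (fpt_rank (fpt_in j))).
Qed.

Lemma proj_exists (F : {fset pts S}) h : H h -> exists g,
  is_orth_proj (restrK K) ip [set y | y \in F] h g /\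
  l2dot (restrF F h) (invmx (gramF K F) *m restrF F h) = ip g g.
Proof.
move=> Hh.
set a := invmx (gramF K F) *m restrF F h.
pose g := fun s => \sum_j a j 0 * kfun (restrK K) (@fpt X S F j) s.
have Hk : forall j, H (kfun (restrK K) (@fpt X S F j)) by move=> j; exact: (rk_mem HR).
have Hg : H g by exact: (H_sum HR H0).
have gy : forall i : 'I_#|{: F}|, g (@fpt X S F i) = h (fpt i).
  move=> i; have := congr1 (fun M : 'cV[R]_#|{: F}| => M i 0) (mulKVmx (gram_unit F) (restrF F h)).
  rewrite !mxE => E; rewrite -[RHS]E /g /kfun /restrK.
  apply: eq_bigr => j _; rewrite /gramF !mxE; exact: mulrC.
exists g; split.
  split.
    by exists #|{: F}|, (@fpt X S F), (fun j => a j 0); split => // j; exact: fpt_in.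
  move=> y yF; rewrite (ip_sym HR (fsub_H HR Hh Hg) (rk_mem HR _)).
  rewrite (rk_repr HR _ (fsub_H HR Hh Hg)) /fsub.
  have := gy (frank yF); rewrite fpt_rank => ->; exact: subrr.
rewrite {2}/g (ip_sum_l HR H0) // /l2dot; apply: eq_bigr => j _.
by rewrite (rk_repr HR _ Hg) gy mxE mulrC.
Qed.

End Spec.

Lemma esup_eq (R : realType) (x : R) (E : set (\bar R)) :
  (forall y, E y -> (y <= x%:E)%E) ->
  (forall e : R, 0 < e -> exists r : R, E r%:E /\ x - e < r) ->
  x%:E = ereal_sup E.
Proof.
move=> ub ap; apply/eqP; rewrite eq_le ge_ereal_sup ?andbT; last by move=> y /ub.
have ubs : forall y, E y -> (y <= ereal_sup E)%E by move=> y Ey; exact: ereal_sup_ubound.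
have [r [Er _]] := ap 1 ltr01.
case E0: (ereal_sup E) ubs => [s| |] ubs //=; last first.
  by have := ubs _ Er; rewrite leeNy_eq.
  by rewrite leey.
rewrite lee_fin leNgt; apply/negP => sx.
have [r' [Er' hr']] : exists r : R, E r%:E /\ x - (x - s) < r.
  by apply: ap; rewrite subr_gt0.
have := ubs _ Er'; rewrite lee_fin; lra.
Qed.

Unset Implicit Arguments.
Set Strict Implicit.

Theorem corollary8p16 (R : realType) (X : Type) (K : X -> X -> R) (S : set X)
  (H : set (pts S -> R)) (ip : (pts S -> R) -> (pts S -> R) -> R) :
  pos_def_kernel K ->
  countable S ->
  is_RKHS (restrK K) H ip ->
  (forall x : pts S, H (dirac_fun (R:=R) x)) ->
  forall h, H h ->
    (* (1) *)
    ((ip h h)%:E =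
       ereal_sup [set r : \bar R | exists (F : {fset pts S}) (g : pts S -> R),
           is_orth_proj (restrK K) ip [set y | y \in F] h g /\
           r = (l2dot (restrF F h) (restrF F (laplacian ip g)))%:E]
     /\ (ip h h)%:E =
       ereal_sup [set r : \bar R | exists F : {fset pts S},
           r = (l2dot (restrF F h) (invmx (gramF K F) *m restrF F h))%:E])
    (* (2) *)
    /\ (forall (F : {fset pts S}) (g : pts S -> R),
          is_orth_proj (restrK K) ip [set y | y \in F] h g ->
          forall i : 'I_#|{: F}|,
            laplacian ip g (fpt i) = (invmx (gramF K F) *m restrF F h) i 0)
    (* (3) *)
    /\ (forall (F : {fset pts S}) (g : pts S -> R),
          is_orth_proj (restrK K) ip [set y | y \in F] h g ->
          gramF K F *m restrF F (laplacian ip g) = restrF F h).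
Proof.
move=> [Ksym _] _ HR Hd h Hh.
have H0 : H (fun _ => 0).
  have := rk_lin HR (-1) Hh Hh.
  rewrite (_ : (fun s => -1 * h s + h s) = fun _ => 0) //.
  by apply: funext => s; rewrite mulN1r addNr.
have P3 : forall (F : {fset pts S}) g,
    is_orth_proj (restrK K) ip [set y | y \in F] h g ->
    gramF K F *m restrF F (laplacian ip g) = restrF F h.
  move=> F g Hp; exact: (proj3 HR H0 Hd Hh Hp).
have P2m : forall (F : {fset pts S}) g,
    is_orth_proj (restrK K) ip [set y | y \in F] h g ->
    restrF F (laplacian ip g) = invmx (gramF K F) *m restrF F h.
  by move=> F g Hp; rewrite -(P3 F g Hp) mulKmx // (gram_unit HR H0 Hd Ksym).
have val : forall F : {fset pts S}, exists g,
    is_orth_proj (restrK K) ip [set y | y \in F] h g /\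
    l2dot (restrF F h) (invmx (gramF K F) *m restrF F h) = ip g g.
  move=> F; exact: (proj_exists HR H0 Hd Ksym F Hh).
have sup2 : (ip h h)%:E = ereal_sup [set r : \bar R | exists F : {fset pts S},
           r = (l2dot (restrF F h) (invmx (gramF K F) *m restrF F h))%:E].
  apply: esup_eq.
    move=> y [F ->]; have [g [Hp ->]] := val F.
    rewrite lee_fin (pyth HR H0 Hh Hp) lerDl.
    exact: (ip_ge0 HR (fsub_H HR Hh (kspan_H HR H0 Hp.1))).
  move=> e e0; have [f [[n [t [c [_ fE]]]] hf]] := rk_dense HR Hh e0.
  pose F := [fset t i | i : 'I_n].
  have [g [Hp vE]] := val F.
  exists (l2dot (restrF F h) (invmx (gramF K F) *m restrF F h)); split.
    by exists F.
  have fF : kspan (restrK K) [set y | y \in F] f.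
    exists n, t, c; split => // i; apply/imfsetP; by exists i.
  have := best_approx HR H0 Hh Hp fF; have := pyth HR H0 Hh Hp.
  rewrite vE; lra.
split; first split.
- rewrite sup2; congr ereal_sup; apply/seteqP; split => r.
    by move=> [F ->]; have [g [Hp _]] := val F; exists F, g; split => //; rewrite P2m.
  by move=> [F [g [Hp ->]]]; exists F; rewrite (P2m F g Hp).
- exact: sup2.
split.
- by move=> F g Hp i; rewrite -(P2m F g Hp) mxE.
- exact: P3.
Qed.
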